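(* Let $G$ and $H$ be two connected graphs with $\mathrm{toi}(G)=3$ and $\mathrm{toi}(H)=2$. Then $\mathrm{toi}(G \square H) \geq 3$. Furthermore, equality holds when $G=K_3$ and $H=K_2$. In general, if $H$ is not isomorphic to $K_2$, then $\mathrm{toi}(G \square H) \geq 4$.
   Context: $\mathrm{toi}(G)$ is the maximum $t$ such that $G$ contains a totally odd strong immersion of $K_t$ (an injective map of $V(K_t)$ into $V(G)$ with pairwise edge-disjoint odd paths joining each pair of terminals, no terminal being an interior vertex of any path). $G\square H$ is the Cartesian product: vertex set $V(G)\times V(H)$, with $(g_1,h_1)\sim(g_2,h_2)$ iff ($g_1=g_2$ and $h_1h_2\in E(H)$) or ($h_1=h_2$ and $g_1g_2\in E(G)$). *)

(* Defs.v *)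
From Stdlib Require Import ClassicalEpsilon.
From mathcomp Require Import all_boot.
Set Implicit Arguments. Unset Strict Implicit. Unset Printing Implicit Defensive.

Record sgraph := SGraph {
  vert :> finType;
  adj : rel vert;
  adj_sym : symmetric adj;
  adj_irr : irreflexive adj }.

Definition connected (G : sgraph) : Prop :=
  forall x y : G, connect (@adj G) x y.

Definition isomorphic (G H : sgraph) : Prop :=
  exists f : G -> H, bijective f /\ forall x y, adj (f x) (f y) = adj x y.

Definition Kadj n : rel 'I_n := fun i j => i != j.
Lemma Kadj_sym n : symmetric (@Kadj n).
Proof. by move=> i j; rewrite /Kadj eq_sym. Qed.
Lemma Kadj_irr n : irreflexive (@Kadj n).
Proof. by move=> i; rewrite /Kadj eqxx. Qed.
Definition K n : sgraph := SGraph (@Kadj_sym n) (@Kadj_irr n).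

Definition cart_adj (G H : sgraph) : rel (G * H)%type :=
  fun u v => ((u.1 == v.1) && adj u.2 v.2) || ((u.2 == v.2) && adj u.1 v.1).
Lemma cart_adj_sym G H : symmetric (@cart_adj G H).
Proof.
by move=> u v; rewrite /cart_adj (eq_sym u.1) (eq_sym u.2) (adj_sym u.1) (adj_sym u.2).
Qed.
Lemma cart_adj_irr G H : irreflexive (@cart_adj G H).
Proof. by move=> u; rewrite /cart_adj !adj_irr !andbF. Qed.
Definition cart (G H : sgraph) : sgraph :=
  SGraph (@cart_adj_sym G H) (@cart_adj_irr G H).

(* A path from x to y is given by the list p of vertices after x:
   the vertex sequence is x :: p, consecutive vertices adjacent, all distinct,
   ending at y. Its length (number of edges) is size p. *)
Definition is_path (G : sgraph) (x y : G) (p : seq G) : bool :=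
  [&& path (@adj G) x p, uniq (x :: p) & last x p == y].

Definition path_edges (G : sgraph) (x : G) (p : seq G) : seq {set G} :=
  [seq [set e.1; e.2] | e <- zip (x :: p) p].

Definition interior (G : sgraph) (x : G) (p : seq G) : seq G :=
  behead (belast x p).

(* Totally odd strong immersion of K_t in G: injective terminal map f and,
   for every pair i < j, an odd path P i j from f i to f j; paths for
   distinct pairs are edge-disjoint; no terminal is an interior vertex of
   any path. *)
Definition toi_immersion (G : sgraph) (t : nat) : Prop :=
  exists (f : 'I_t -> G) (P : 'I_t -> 'I_t -> seq G),
    injective f /\
    (forall i j : 'I_t, i < j ->
       is_path (f i) (f j) (P i j) /\ odd (size (P i j))) /\
    (forall i j k l : 'I_t, i < j -> k < l -> (i, j) != (k, l) ->
       forall e, e \in path_edges (f i) (P i j) ->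
                 e \notin path_edges (f k) (P k l)) /\
    (forall i j k : 'I_t, i < j -> f k \notin interior (f i) (P i j)).

Definition decP (P : Prop) : bool :=
  if excluded_middle_informative P then true else false.

(* toi G: the maximum t with a totally odd strong immersion of K_t in G
   (t <= #|G| since the terminal map is injective). *)
Definition toi (G : sgraph) : nat :=
  \max_(t < #|G|.+1 | decP (toi_immersion G t)) t.

(* Main.v *)
Require Import Defs.
From Stdlib Require Import ClassicalEpsilon.
From mathcomp Require Import all_boot.
From mathcomp Require Import zify.
From Stdlib Require Import Lia.
Set Implicit Arguments. Unset Strict Implicit. Unset Printing Implicit Defensive.

Lemma decPP (P : Prop) : Defs.decP P = true <-> P.
Proof. rewrite /Defs.decP; destruct (excluded_middle_informative P); by split. Qed.

Lemma toi_ge (G : sgraph) t : toi_immersion G t -> t <= toi G.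
Proof.
move=> Ht; have Hc : t < #|G|.+1.
  case: Ht => f [P [finj _]]; rewrite ltnS.
  by have := leq_card f finj; rewrite card_ord.
rewrite /toi; apply: (@leq_bigmax_cond _ (fun i : 'I_#|G|.+1 => Defs.decP (toi_immersion G i)) (fun i => nat_of_ord i) (Ordinal Hc)).
by apply/decPP.
Qed.

Lemma toi_le (G : sgraph) k : (forall t, toi_immersion G t -> t <= k) -> toi G <= k.
Proof.
move=> H; apply/bigmax_leqP => i /decPP; exact: H.
Qed.

Lemma toi_imm (G : sgraph) t : toi G = t -> 0 < t -> toi_immersion G t.
Proof.
rewrite /toi.
set A := (fun i : 'I_#|G|.+1 => Defs.decP (toi_immersion G i)).
case: (pickP A) => [i Ai | A0].
  have : 0 < #|A| by apply/card_gt0P; exists i.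
  case/(eq_bigmax_cond (fun i : 'I_#|G|.+1 => nat_of_ord i)) => i0 Ai0 ->.
  by move=> <- _; apply/decPP.
by rewrite big_pred0 // => <-.
Qed.


Definition V32 := cart (K 3) (K 2).
Definition nadj (x y : V32) := ~~ adj x y.
Definition o3 i (h : i < 3) : 'I_3 := Ordinal h.
Definition o2 i (h : i < 2) : 'I_2 := Ordinal h.
Definition vl : seq V32 := [:: (@o3 0 isT, @o2 0 isT); (@o3 0 isT, @o2 1 isT);
 (@o3 1 isT, @o2 0 isT); (@o3 1 isT, @o2 1 isT); (@o3 2 isT, @o2 0 isT); (@o3 2 isT, @o2 1 isT)].
Lemma vl_all (x : V32) : x \in vl.
Proof. by case: x => [[[|[|[|?]]] ?] [[|[|?]] ?]]. Qed.
Lemma fact0 : all (fun w0 => all (fun w1 => all (fun w2 => all (fun w3 =>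
  uniq [:: w0; w1; w2; w3] ==>
  (1 < nadj w0 w1 + nadj w0 w2 + nadj w0 w3 + nadj w1 w2 + nadj w1 w3 + nadj w2 w3)) vl) vl) vl) vl.
Proof. by vm_compute. Qed.

Lemma fact1 (w0 w1 w2 w3 : V32) : uniq [:: w0; w1; w2; w3] ->
  1 < nadj w0 w1 + nadj w0 w2 + nadj w0 w3 + nadj w1 w2 + nadj w1 w3 + nadj w2 w3.
Proof.
move=> U; move: fact0.
move/allP/(_ w0 (vl_all _))/allP/(_ w1 (vl_all _))/allP/(_ w2 (vl_all _))/allP/(_ w3 (vl_all _)).
by rewrite U.
Qed.

Lemma card_V32 : #|V32| = 6.
Proof. by rewrite card_prod !card_ord. Qed.

Lemma no_K4 : ~ toi_immersion V32 4.
Proof.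
case=> f [P [finj [Hp [Hd Hi]]]].
set S := ~: [set f k | k in 'I_4].
have cS : #|S| = 2.
  by rewrite cardsCs setCK card_V32 card_imset // card_ord.
have long : forall i j : 'I_4, i < j -> nadj (f i) (f j) -> S \in path_edges (f i) (P i j).
  move=> i j ij na; have [/and3P [pa un la] od] := Hp i j ij.
  have Hk := fun k => Hi i j k ij.
  move: pa un la od Hk; case: (P i j) => [|p1 [|p2 [|p3 r]]] //=.
    rewrite andbT => a _ /eqP e; move: na; rewrite /nadj -e => /negP H _ _; exfalso; exact: H a.
  move=> pa /and5P [_ n2 _ _ _] _ _ Hk.
  have n12 : p1 != p2 by move: n2; rewrite in_cons negb_or => /andP [].
  have p1S : p1 \in S.
    rewrite inE; apply/imsetP => -[k _ e]; by move: (Hk k); rewrite -e inE eqxx.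
  have p2S : p2 \in S.
    rewrite inE; apply/imsetP => -[k _ e]; by move: (Hk k); rewrite -e !inE eqxx orbT.
  suff -> : S = [set p1; p2] by rewrite !inE eqxx orbT.
  apply/eqP; rewrite eq_sym eqEcard cS cards2 n12 andbT.
  by apply/subsetP => x; rewrite in_set2 => /orP [] /eqP ->.
have L : forall i j k l : 'I_4, i < j -> k < l -> (i, j) != (k, l) ->
    nadj (f i) (f j) -> nadj (f k) (f l) -> False.
  move=> i j k l ij kl ne n1 n2.
  by move: (Hd i j k l ij kl ne S (long i j ij n1)); rewrite long.
pose i0 := @Ordinal 4 0 isT; pose i1 := @Ordinal 4 1 isT;
pose i2 := @Ordinal 4 2 isT; pose i3 := @Ordinal 4 3 isT.
have U : uniq [:: f i0; f i1; f i2; f i3].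
  by rewrite /= !inE !(inj_eq finj).
have := fact1 U.
case E01: (nadj (f i0) (f i1)); case E02: (nadj (f i0) (f i2));
case E03: (nadj (f i0) (f i3)); case E12: (nadj (f i1) (f i2));
case E13: (nadj (f i1) (f i3)); case E23: (nadj (f i2) (f i3)) => //= _;
  solve [ exact: (L _ _ _ _ _ _ _ E01 E02) | exact: (L _ _ _ _ _ _ _ E01 E03)
        | exact: (L _ _ _ _ _ _ _ E01 E12) | exact: (L _ _ _ _ _ _ _ E01 E13)
        | exact: (L _ _ _ _ _ _ _ E01 E23) | exact: (L _ _ _ _ _ _ _ E02 E03)
        | exact: (L _ _ _ _ _ _ _ E02 E12) | exact: (L _ _ _ _ _ _ _ E02 E13)
        | exact: (L _ _ _ _ _ _ _ E02 E23) | exact: (L _ _ _ _ _ _ _ E03 E12)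
        | exact: (L _ _ _ _ _ _ _ E03 E13) | exact: (L _ _ _ _ _ _ _ E03 E23)
        | exact: (L _ _ _ _ _ _ _ E12 E13) | exact: (L _ _ _ _ _ _ _ E12 E23)
        | exact: (L _ _ _ _ _ _ _ E13 E23) ].
Qed.

Lemma imm_sub (G : sgraph) s t : s <= t -> toi_immersion G t -> toi_immersion G s.
Proof.
move=> st [f [P [finj [Hp [Hd Hi]]]]].
exists (fun i => f (widen_ord st i)), (fun i j => P (widen_ord st i) (widen_ord st j)).
split; first by move=> i j /finj E; apply/val_inj; exact: (congr1 val E).
split; first by move=> i j ij; apply: Hp.
split; last by move=> i j k ij; apply: Hi.
move=> i j k l ij kl ne; apply: Hd => //=.
Qed.

Section Hom.
Variables (G G' : sgraph) (phi : G -> G').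
Hypothesis phi_inj : injective phi.
Hypothesis phi_adj : forall x y, adj x y -> adj (phi x) (phi y).

Lemma path_map_hom x p : path (@adj G) x p -> path (@adj G') (phi x) (map phi p).
Proof. by elim: p x => //= y p IH x /andP [a /IH ->]; rewrite phi_adj. Qed.

Lemma path_edges_map x p :
  path_edges (phi x) (map phi p) = map (fun e : {set G} => phi @: e) (path_edges x p).
Proof.
elim: p x => //= y p IH x; have := IH y; rewrite /path_edges /= => ->.
by rewrite imsetU !imset_set1.
Qed.

Lemma interior_map x p : interior (phi x) (map phi p) = map phi (interior x p).
Proof. by rewrite /interior belast_map; case: (belast x p). Qed.

Lemma imm_hom t : toi_immersion G t -> toi_immersion G' t.
Proof.
case=> f [P [finj [Hp [Hd Hi]]]].
exists (fun i => phi (f i)), (fun i j => map phi (P i j)).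
split; first by move=> i j /phi_inj /finj.
split.
  move=> i j ij; have [/and3P [pa un la] od] := Hp i j ij.
  rewrite /is_path size_map od; split => //; apply/and3P; split.
  - exact: path_map_hom.
  - by rewrite -map_cons (map_inj_uniq phi_inj).
  - by rewrite last_map (eqP la).
split; last first.
  by move=> i j k ij; rewrite interior_map (mem_map phi_inj) Hi.
move=> i j k l ij kl ne e; rewrite !path_edges_map => /mapP [e1 e1i ->].
apply/mapP => -[e2 e2k /(imset_inj phi_inj) E].
by move: (Hd i j k l ij kl ne e1 e1i); rewrite E e2k.
Qed.
End Hom.

Section Cyc.
Variable G : sgraph.
Notation e := (@adj G).

Lemma notuniq_split (p : seq G) : ~~ uniq p ->
  exists p1 v p2 p3, p = p1 ++ v :: p2 ++ v :: p3.
Proof.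
elim: p => //= y q IH; rewrite negb_and negbK => /orP [yq | /IH [p1 [v [p2 [p3 ->]]]]].
  by case/splitPr: yq => p2 p3; exists [::], y, p2, p3.
by exists (y :: p1), v, p2, p3.
Qed.

Definition cow (x : G) (p : seq G) := [&& path e x p, last x p == x & odd (size p)].

Lemma cow_uniq n x p : size p <= n -> cow x p -> exists x' p', cow x' p' && uniq p'.
Proof.
elim: n x p => [|n IH] x p.
  by rewrite leqn0 => /nilP -> /and3P [].
move=> sz cw; case U: (uniq p); first by exists x, p; rewrite cw U.
have [p1 [v [p2 [p3 E]]]] := notuniq_split (negbT U).
move: cw; rewrite /cow E => /and3P [].
rewrite cat_path /= cat_path /= => /and5P [pa1 a1 pa2 a2 pa3].
rewrite last_cat /= last_cat /= => la.
rewrite size_cat /= size_cat /= => od.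
move: sz; rewrite E size_cat /= size_cat /= => sz.
case O: (odd (size p2).+1).
  apply: (IH v (rcons p2 v)); first by rewrite size_rcons; lia.
  by rewrite /cow rcons_path pa2 a2 last_rcons eqxx size_rcons O.
apply: (IH x (p1 ++ v :: p3)).
  by rewrite size_cat /=; lia.
rewrite /cow cat_path /= pa1 a1 pa3 last_cat /= la /= size_cat /=.
move: od O; rewrite /= !oddD /=.
by rewrite !oddD /=; case: (odd (size p1)); case: (odd (size p2)); case: (odd (size p3)).
Qed.

Lemma cycle_data x p : cow x p -> exists a b c (m : seq G),
  [&& uniq (a :: b :: c :: m), path e a (rcons m c), e c b, e b a & ~~ odd (size m)].
Proof.
move=> cw; have [x' [p' /andP [cw' U]]] := cow_uniq (leqnn _) cw.
move: cw' U; case/lastP: p' => [|q a]; first by case/and3P.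
case/lastP: q => [|q b].
  by rewrite /cow /= => /and3P [/andP [ab _] /eqP E _]; rewrite E (@adj_irr G) in ab.
case/lastP: q => [|m c].
  by rewrite /cow /= => /and3P [].
rewrite /cow !rcons_path !last_rcons !size_rcons /=.
move=> /and3P [/andP [/andP [/andP [pm lc] cb] ba] /eqP xa od] U.
rewrite xa in U ba.
exists x', b, c, m; rewrite rcons_path pm lc cb ba /=.
have : perm_eq (rcons (rcons (rcons m c) b) x') [:: x', b, c & m].
  by rewrite !perm_rcons /= perm_cons !perm_rcons /= perm_cons perm_rcons.
move/perm_uniq; rewrite U /= => <-.
by move: od; rewrite negbK.
Qed.
End Cyc.

Lemma zip_mem (T : eqType) (x : T) p u v : (u, v) \in zip (x :: p) p ->
  (u \in x :: p) && (v \in x :: p).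
Proof.
elim: p x => //= y p IH x; rewrite in_cons => /orP [/eqP [-> ->] | /IH].
  by rewrite !inE !eqxx !orbT.
by rewrite !(inE) => /andP [-> ->]; rewrite !orbT.
Qed.

Lemma zip_adj (T : sgraph) (x : T) p u v : path (@adj T) x p -> (u, v) \in zip (x :: p) p -> adj u v.
Proof.
elim: p x => //= y p IH x /andP [xy py]; rewrite in_cons => /orP [/eqP [-> ->] //| ].
exact: IH.
Qed.

Lemma edisj_zip (T : sgraph) (x1 x2 : T) p1 p2 :
  (forall u v, (u, v) \in zip (x1 :: p1) p1 -> u \in x2 :: p2 -> v \in x2 :: p2 -> False) ->
  forall e, e \in path_edges x1 p1 -> e \notin path_edges x2 p2.
Proof.
move=> H e /mapP [[u v] uv ->]; apply/mapP => -[[u' v'] uv' E].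
have /andP [u'V v'V] := zip_mem uv'.
apply: (H u v uv).
  have : u \in [set u; v] by rewrite !inE eqxx.
  by rewrite E /= !inE => /orP [] /eqP ->.
have : v \in [set u; v] by rewrite !inE eqxx orbT.
by rewrite E /= !inE => /orP [] /eqP ->.
Qed.

Lemma edisj (T : sgraph) (x1 x2 : T) p1 p2 : path (@adj T) x1 p1 ->
  (forall u v, u \in x1 :: p1 -> v \in x1 :: p1 -> u \in x2 :: p2 -> v \in x2 :: p2 ->
     adj u v -> False) ->
  forall e, e \in path_edges x1 p1 -> e \notin path_edges x2 p2.
Proof.
move=> pa H; apply: edisj_zip => u v uv.
have /andP [u1 v1] := zip_mem uv.
move=> u2 v2; exact: (H u v u1 v1 u2 v2 (zip_adj pa uv)).
Qed.

Lemma edisj_flip (T : sgraph) (x1 x2 : T) p1 p2 :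
  (forall e, e \in path_edges x1 p1 -> e \notin path_edges x2 p2) ->
  forall e, e \in path_edges x2 p2 -> e \notin path_edges x1 p1.
Proof. by move=> H e e2; apply/negP => /H; rewrite e2. Qed.

Definition L (G H : sgraph) (h : H) (g : G) : cart G H := (g, h).

Lemma memL (G H : sgraph) (h : H) (s : seq G) (u : cart G H) :
  (u \in map (L h) s) = (u.2 == h) && (u.1 \in s).
Proof.
case: u => g k /=; apply/mapP/andP => [[g' g's [-> ->]] | [/eqP -> gs]] //.
by exists g.
Qed.

Lemma L_inj (G H : sgraph) (h : H) : injective (@L G H h).
Proof. by move=> x y [->]. Qed.

Lemma L_adj (G H : sgraph) (h : H) x y : adj x y -> adj (@L G H h x) (L h y).
Proof. by move=> xy; rewrite /= /cart_adj /= eqxx xy orbT. Qed.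

Ltac vcrush :=
  repeat (match goal with
  | H : is_true (?x != ?x) |- _ => exfalso; move: H; rewrite eqxx; discriminate
  | H : is_true (?x \in ?s), H' : is_true (?x \notin ?s) |- _ => exfalso; move: H'; rewrite H; discriminate
  | H : is_true (_ \in [::]) |- _ => exfalso; move: H; rewrite in_nil; discriminate
  | H : is_true (adj ?x ?x) |- _ => exfalso; move: H; rewrite adj_irr; discriminate
  | H : is_true (_ \in _ :: _) |- _ => rewrite in_cons in H
  | H : is_true (_ \in rcons _ _) |- _ => rewrite mem_rcons in H
  | H : is_true (_ \in _ ++ _) |- _ => rewrite mem_cat in H
  | H : is_true (_ \in map (L _) _) |- _ => rewrite memL /= in H
  | H : is_true (_ || _) |- _ => case/orP: H => H
  | H : is_true (_ && _) |- _ => let H1 := fresh "H" in let H2 := fresh "H" in case/andP: H => H1 H2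
  | H : is_true ((_, _) == (_, _)) |- _ => rewrite xpair_eqE in H
  | H : is_true (?x == ?y) |- _ => move/eqP: H => H; subst
  end).

Section K4.
Variables (G H : sgraph) (a b c : G) (m : seq G) (h1 h2 h3 : H).
Hypotheses (nab : a != b) (nac : a != c) (nam : a \notin m) (nbc : b != c)
  (nbm : b \notin m) (ncm : c \notin m) (n12 : h1 != h2) (n23 : h2 != h3) (n13 : h1 != h3)
  (um : uniq m) (pm : path (@adj G) a (rcons m c)) (cb : adj c b) (ba : adj b a)
  (em : ~~ odd (size m)) (a12 : adj h1 h2) (a23 : adj h2 h3).
Local Notation A := ((a, h1) : cart G H).
Local Notation B := ((a, h2) : cart G H).
Local Notation C := ((b, h1) : cart G H).
Local Notation D := ((c, h1) : cart G H).
Local Notation AD := (map (L h1) (rcons m c)).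
Local Notation BC := (map (L h2) (rcons (rcons m c) b) ++ [:: C]).
Local Notation BD := [:: ((a, h3) : cart G H); (b, h3); (c, h3); (c, h2); D].

Local Notation AB := [:: B].
Local Notation AC := [:: C].
Local Notation CD := [:: D].

Let ab : adj a b. Proof. by rewrite adj_sym. Qed.
Let bc : adj b c. Proof. by rewrite adj_sym. Qed.
Let a21 : adj h2 h1. Proof. by rewrite adj_sym. Qed.
Let a32 : adj h3 h2. Proof. by rewrite adj_sym. Qed.

Ltac cadj := rewrite /= /cart_adj /= ?eqxx ?ab ?bc ?cb ?ba ?a12 ?a21 ?a23 ?a32 ?orbT.

Lemma pAB : path (@adj (cart G H)) A AB. Proof. by cadj. Qed.
Lemma pAC : path (@adj (cart G H)) A AC. Proof. by cadj. Qed.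
Lemma pCD : path (@adj (cart G H)) C CD. Proof. by cadj. Qed.
Lemma pBD : path (@adj (cart G H)) B BD. Proof. by cadj. Qed.
Lemma pAD : path (@adj (cart G H)) A AD.
Proof. exact: (path_map_hom (@L_adj G H h1) pm). Qed.
Lemma pBC : path (@adj (cart G H)) B BC.
Proof.
rewrite cat_path; apply/andP; split.
  apply: (path_map_hom (@L_adj G H h2)); by rewrite rcons_path pm last_rcons cb.
by rewrite (last_map (L h2) _ a) last_rcons; cadj.
Qed.

Ltac dtac pf := apply: (edisj pf) => -[g k] [g' k'] H1 H2 H3 H4 H5; vcrush.

Lemma dAB_AC e : e \in path_edges A AB -> e \notin path_edges A AC. Proof. by dtac pAB. Qed.
Lemma dAB_AD e : e \in path_edges A AB -> e \notin path_edges A AD. Proof. by dtac pAB. Qed.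
Lemma dAB_BC e : e \in path_edges A AB -> e \notin path_edges B BC. Proof. by dtac pAB. Qed.
Lemma dAB_BD e : e \in path_edges A AB -> e \notin path_edges B BD. Proof. by dtac pAB. Qed.
Lemma dAB_CD e : e \in path_edges A AB -> e \notin path_edges C CD. Proof. by dtac pAB. Qed.
Lemma dAC_AD e : e \in path_edges A AC -> e \notin path_edges A AD. Proof. by dtac pAC. Qed.
Lemma dAC_BC e : e \in path_edges A AC -> e \notin path_edges B BC. Proof. by dtac pAC. Qed.
Lemma dAC_BD e : e \in path_edges A AC -> e \notin path_edges B BD. Proof. by dtac pAC. Qed.
Lemma dAC_CD e : e \in path_edges A AC -> e \notin path_edges C CD. Proof. by dtac pAC. Qed.
Lemma dAD_BC e : e \in path_edges A AD -> e \notin path_edges B BC. Proof. by dtac pAD. Qed.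
Lemma dAD_BD e : e \in path_edges A AD -> e \notin path_edges B BD. Proof. by dtac pAD. Qed.
Lemma dAD_CD e : e \in path_edges A AD -> e \notin path_edges C CD. Proof. by dtac pAD. Qed.
Lemma dBC_CD e : e \in path_edges B BC -> e \notin path_edges C CD. Proof. by dtac pBC. Qed.
Lemma dBD_CD e : e \in path_edges B BD -> e \notin path_edges C CD. Proof. by dtac pBD. Qed.
Lemma dBD_BC e : e \in path_edges B BD -> e \notin path_edges B BC.
Proof. by apply: edisj_zip => -[g k] [g' k'] /= H1 H2 H3; vcrush. Qed.

Lemma uA : uniq [:: a, b, c & m].
Proof. by rewrite /= !inE !negb_or nab nac nam nbc nbm ncm um. Qed.

Ltac utac := rewrite /=; repeat (apply/andP; split); try done;
  try (apply/negP => Hx; vcrush).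
Lemma okAB : is_path A B AB /\ odd (size AB).
Proof. rewrite /is_path pAB; split => //; by utac. Qed.
Lemma okAC : is_path A C AC /\ odd (size AC).
Proof. rewrite /is_path pAC; split => //; by utac. Qed.
Lemma okCD : is_path C D CD /\ odd (size CD).
Proof. rewrite /is_path pCD; split => //; by utac. Qed.
Lemma okBD : is_path B D BD /\ odd (size BD).
Proof. rewrite /is_path pBD; split => //; by utac. Qed.
Lemma okAD : is_path A D AD /\ odd (size AD).
Proof.
rewrite /is_path pAD size_map size_rcons; split; last by rewrite /= em.
rewrite -[A]/(L h1 a) -map_cons (map_inj_uniq (@L_inj G H h1)) (last_map (L h1) _ a) last_rcons eqxx andbT.
have : perm_eq (a :: rcons m c) [:: a, c & m] by rewrite perm_cons perm_rcons.
move/perm_uniq => ->; by rewrite /= !inE !negb_or nac nam ncm um.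
Qed.
Lemma okBC : is_path B C BC /\ odd (size BC).
Proof.
rewrite /is_path pBC size_cat size_map !size_rcons; split; last by rewrite /= addn1 /= em.
rewrite last_cat /= eqxx andbT.
apply/andP; split; first by apply/negP => Hx; vcrush.
rewrite cat_uniq (map_inj_uniq (@L_inj G H h2)) /= orbF andbT; apply/andP; split; last by apply/negP => Hx; vcrush.
have : perm_eq (rcons (rcons m c) b) [:: b, c & m].
  by rewrite perm_rcons /= perm_cons perm_rcons.
by move/perm_uniq => ->; rewrite /= in_cons negb_or nbc nbm ncm um.
Qed.

Lemma iAD : interior A AD = map (L h1) m.
Proof. by rewrite /interior -[A]/(L h1 a) belast_map belast_rcons. Qed.
Lemma iBC : interior B BC = map (L h2) (rcons (rcons m c) b).
Proof. by rewrite /interior cats1 belast_rcons. Qed.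

Definition T4 := [:: A; B; C; D].
Lemma inT (k : 'I_4) : nth A T4 k \in T4.
Proof. by rewrite mem_nth. Qed.

Ltac itac := let Hx := fresh "Hx" in let k := fresh "k" in let t := fresh "t" in let Ht := fresh "Ht" in move=> k; move: (inT k); move: (nth A T4 k) => -[t1 t2] Ht; rewrite /T4 in Ht; apply/negP => Hx; try rewrite /interior /= in Hx; vcrush.
Lemma intAB : forall k : 'I_4, nth A T4 k \notin interior A AB. Proof. by itac. Qed.
Lemma intAC : forall k : 'I_4, nth A T4 k \notin interior A AC. Proof. by itac. Qed.
Lemma intCD : forall k : 'I_4, nth A T4 k \notin interior C CD. Proof. by itac. Qed.
Lemma intBD : forall k : 'I_4, nth A T4 k \notin interior B BD. Proof. by itac. Qed.
Lemma intAD : forall k : 'I_4, nth A T4 k \notin interior A AD. Proof. by rewrite iAD; itac. Qed.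
Lemma intBC : forall k : 'I_4, nth A T4 k \notin interior B BC. Proof. by rewrite iBC; itac. Qed.

Definition Pn (i j : nat) : seq (cart G H) := match i, j with
  | 0, 1 => AB | 0, 2 => AC | 0, 3 => AD | 1, 2 => BC | 1, 3 => BD | 2, 3 => CD
  | _, _ => [::] end.

Lemma K4_imm : toi_immersion (cart G H) 4.
Proof.
exists (fun i : 'I_4 => nth A T4 i), (fun i j : 'I_4 => Pn i j).
split.
  move=> i j E; apply/val_inj; move: E.
  by case: i => [[|[|[|[|?]]]] ?]; case: j => [[|[|[|[|?]]]] ?] //= /eqP E; vcrush.
split.
  move=> [[|[|[|[|?]]]] ?] [[|[|[|[|?]]]] ?] // _;
  first [exact okAB | exact okAC | exact okAD | exact okBC | exact okBD | exact okCD].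
split.
  move=> i j k l; case: i => [[|[|[|[|?]]]] ?] //; case: j => [[|[|[|[|?]]]] ?] // _;
  case: k => [[|[|[|[|?]]]] ?] //; case: l => [[|[|[|[|?]]]] ?] // _ ne;
  try (exfalso; move: ne; rewrite eqxx; discriminate);
  first [ exact: dAB_AC | exact: (edisj_flip dAB_AC) | exact: dAB_AD | exact: (edisj_flip dAB_AD) | exact: dAB_BC | exact: (edisj_flip dAB_BC) | exact: dAB_BD | exact: (edisj_flip dAB_BD) | exact: dAB_CD | exact: (edisj_flip dAB_CD) | exact: dAC_AD | exact: (edisj_flip dAC_AD) | exact: dAC_BC | exact: (edisj_flip dAC_BC) | exact: dAC_BD | exact: (edisj_flip dAC_BD) | exact: dAC_CD | exact: (edisj_flip dAC_CD) | exact: dAD_BC | exact: (edisj_flip dAD_BC) | exact: dAD_BD | exact: (edisj_flip dAD_BD) | exact: dAD_CD | exact: (edisj_flip dAD_CD) | exact: dBC_CD | exact: (edisj_flip dBC_CD) | exact: dBD_CD | exact: (edisj_flip dBD_CD) | exact: dBD_BC | exact: (edisj_flip dBD_BC) ].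
move=> i j k; case: i => [[|[|[|[|?]]]] ?] //; case: j => [[|[|[|[|?]]]] ?] // _; move: k;
first [exact intAB | exact intAC | exact intAD | exact intBC | exact intBD | exact intCD].
Qed.
End K4.

Lemma K3_cow (G : sgraph) : toi_immersion G 3 -> exists (x : G) p, cow x p.
Proof.
case=> f [P [finj [Hp _]]].
pose i0 := @Ordinal 3 0 isT; pose i1 := @Ordinal 3 1 isT; pose i2 := @Ordinal 3 2 isT.
have [/and3P [pa1 _ /eqP l1] o1] := Hp i0 i1 isT.
have [/and3P [pa2 _ /eqP l2] o2] := Hp i1 i2 isT.
have [/and3P [pa3 _ /eqP l3] o3] := Hp i0 i2 isT.
exists (f i0), (P i0 i1 ++ P i1 i2 ++ rev (belast (f i0) (P i0 i2))).
apply/and3P; split.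
- rewrite cat_path pa1 l1 cat_path pa2 l2 /= -l3 rev_path.
  by rewrite (eq_path (e' := @adj G)) // => x y; rewrite adj_sym.
- rewrite !last_cat l1 l2; move: o3 l3; case: (P i0 i2) => //= y q _ _.
  by rewrite rev_cons last_rcons.
- by rewrite !size_cat size_rev size_belast !oddD o1 o2 o3.
Qed.

Lemma cross (T : sgraph) (S : pred T) x q : x \in S -> last x q \notin S ->
  path (@adj T) x q -> exists z y, [&& z \in S, y \notin S & adj z y].
Proof.
elim: q x => [|y q IH] x /= xS; first by rewrite xS.
move=> lq /andP [xy pq]; case yS: (y \in S); first exact: IH yS lq pq.
by exists x, y; rewrite xS yS xy.
Qed.

Lemma H_triple (H : sgraph) : connected H -> toi H = 2 -> ~ isomorphic H (K 2) ->
  exists h1 h2 h3 : H, [&& adj h1 h2, adj h2 h3 & h1 != h3].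
Proof.
move=> cH tH niso.
case: (toi_imm tH isT) => f [P [_ [Hp _]]].
have [/and3P [pa _ _] od] := Hp (@Ordinal 2 0 isT) (@Ordinal 2 1 isT) isT.
move: pa od; case: (P _ _) => // v q /= /andP [uv _] _.
set u := f _ in uv.
have nuv : u != v by apply: contraTneq uv => ->; rewrite adj_irr.
case: (pickP (fun w => (w != u) && (w != v))) => [w /andP [wu wv] | none].
  have /connectP [q' pq' wl] := cH u w.
  have := @cross H [pred z | (z == u) || (z == v)] u q'.
  rewrite !inE eqxx -wl (negbTE wu) (negbTE wv) /= => /(_ isT isT pq') [z [y]].
  rewrite !inE !negb_or => /and3P [/orP [] /eqP -> /andP [yu yv] zy].
    exists v, u, y; rewrite adj_sym uv zy /=; by rewrite eq_sym.
  by exists u, v, y; rewrite uv zy eq_sym yu.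
exfalso; apply: niso.
have uv2 : forall x, (x == u) || (x == v).
  by move=> x; have := none x; rewrite /=; case: (x == u); case: (x == v).
pose phi := fun x : H => if x == u then (@Ordinal 2 0 isT : K 2) else (@Ordinal 2 1 isT : K 2).
pose psi := fun i : K 2 => if val i == 0 then u else v.
exists phi; split.
  exists psi.
    move=> x; rewrite /phi /psi; case E: (x == u) => /=; first by rewrite (eqP E).
    by move: (uv2 x); rewrite E /= => /eqP ->.
  move=> [[|[|?]] ?] //; rewrite /psi /phi /= ?eqxx //.
    by apply/val_inj.
  by rewrite eq_sym (negbTE nuv); apply/val_inj.
move=> x y; rewrite /phi /=.
case/orP: (uv2 x) => /eqP ->; case/orP: (uv2 y) => /eqP ->;
  rewrite ?eqxx ?(negbTE nuv) ?(eq_sym v u) ?(negbTE nuv) ?adj_irr //.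
all: try by rewrite uv.
all: by rewrite adj_sym uv.
Qed.

Lemma K3_self : toi_immersion (K 3) 3.
Proof.
exists id, (fun i j => [:: j]).
split => //; split.
  by move=> i j ij; rewrite /is_path /= /Kadj -(inj_eq val_inj) neq_ltn ij /= !inE -(inj_eq val_inj) neq_ltn ij /=.
split => //.
move=> i j k l ij kl ne e; rewrite /path_edges /= !inE => /eqP ->; apply/negP => /eqP E.
have Hi : i \in [set k; l] by rewrite -E !inE eqxx.
have Hj : j \in [set k; l] by rewrite -E !inE eqxx orbT.
have Hk : k \in [set i; j] by rewrite E !inE eqxx.
move: ne Hi Hj Hk ij kl; rewrite !inE xpair_eqE -!(inj_eq val_inj) /=.
move: (nat_of_ord i) (nat_of_ord j) (nat_of_ord k) (nat_of_ord l) => a b c d.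
lia.
Qed.

Theorem mainTheorem7 :
  (forall G H : sgraph,
     connected G -> connected H -> toi G = 3 -> toi H = 2 ->
     3 <= toi (cart G H) /\
     (~ isomorphic H (K 2) -> 4 <= toi (cart G H)))
  /\ toi (cart (K 3) (K 2)) = 3.
Proof.
split.
  move=> G H cG cH tG tH.
  have imG := toi_imm tG isT.
  have [f _] := toi_imm tH isT.
  split.
    apply: toi_ge; exact: (imm_hom (@L_inj G H (f ord0)) (@L_adj G H (f ord0)) imG).
  move=> niso.
  have [x [p cw]] := K3_cow imG.
  have [a [b [c [m /and5P [U pm cb ba em]]]]] := cycle_data cw.
  have [h1 [h2 [h3 /and3P [a12 a23 n13]]]] := H_triple cH tH niso.
  move: U; rewrite /= !inE !negb_or => /and4P [/and3P [nab nac nam] /andP [nbc nbm] ncm um].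
  have n12 : h1 != h2 by apply: contraTneq a12 => ->; rewrite adj_irr.
  have n23 : h2 != h3 by apply: contraTneq a23 => ->; rewrite adj_irr.
  apply: toi_ge; exact: (K4_imm nab nac nam nbc nbm ncm n12 n23 n13 um pm cb ba em a12 a23).
apply/eqP; rewrite eqn_leq; apply/andP; split.
  apply: toi_le => t imt; rewrite leqNgt; apply/negP => t4.
  exact: no_K4 (imm_sub t4 imt).
apply: toi_ge.
exact: (imm_hom (@L_inj (K 3) (K 2) ord0) (@L_adj (K 3) (K 2) ord0) K3_self).
Qed.
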